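(* Let $V\subset\mathbb{R}^d$ be a finite set of voters, $C\subset\mathbb{R}^d$ a finite set of candidates, $k\ge1$, $f\ge0$ integers and $\sigma\ge\sigma_f(C)$ a real number. Run the following algorithm: set $T\gets\emptyset$; while there exists $J\subseteq C$ with $|J|\le f$ and $\delta(T,J)>3\sigma$: set $T\gets T\setminus J$, and then, while there exists $v\in V$ with $d(v,T)>3\sigma$, choose a candidate $c\in C\setminus J$ with $d(v,c)\le\sigma$, set $T\gets T\cup\{c\}$ and $\mathsf{wit}[c]\gets v$; finally return $T$. If $T$ is the committee computed by this algorithm, then $d(\mathsf{wit}[c],\mathsf{wit}[c'])>2\sigma$ for any two distinct $c,c'\in T$.
   Context: Distances are Euclidean; $d(v,S)=\min_{c\in S}d(v,c)$ (with $d(v,\emptyset)=\infty$). For $S\subseteq C$, $\sigma_0(S)=\max_{v\in V}d(v,S)$. For a committee $T\subseteq C$ and failing set $J\subseteq C$, $\delta(T,J)=\min_{K\subseteq C\setminus J,\ |K|=|T\cap J|}\sigma_0((T\setminus J)\cup K)$, and $\sigma_f(T)=\max_{J\subseteq C,|J|\le f}\delta(T,J)$; in particular $\sigma_f(C)$ is this quantity for $T=C$. $\mathsf{wit}[c]$ denotes the value last assigned to $c$ by the algorithm. *)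

(* Defs.v *)
From HB Require Import structures.
From mathcomp Require Import all_boot all_order all_algebra.
From mathcomp Require Import finmap.
From mathcomp Require Import all_classical all_reals ereal.
Set Implicit Arguments. Unset Strict Implicit. Unset Printing Implicit Defensive.
Import Order.TTheory GRing.Theory Num.Theory.
Local Open Scope ring_scope.
Local Open Scope fset_scope.

Section Defs.
Variables (R : realType) (d : nat).
Notation pt := 'rV[R]_d.

Definition edist (x y : pt) : R := Num.sqrt (\sum_(i < d) (x ord0 i - y ord0 i) ^+ 2).

(* d(v,S) = min_{c in S} d(v,c), with d(v, emptyset) = +oo *)
Definition dset (v : pt) (S : {fset pt}) : \bar R :=
  \big[Order.min/+oo%E]_(c <- S) (edist v c)%:E.

(* sigma_0(S) = max_{v in V} d(v,S)  (0 if V is empty; distances are >= 0) *)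
Definition sigma0 (V S : {fset pt}) : \bar R :=
  \big[Order.max/0%E]_(v <- V) dset v S.

Definition delta (V C T J : {fset pt}) : \bar R :=
  \big[Order.min/+oo%E]_(K <- fpowerset (C `\` J) | #|` K| == #|` (T `&` J)|)
     sigma0 V ((T `\` J) `|` K).

Definition sigmaf (V C : {fset pt}) (f : nat) (T : {fset pt}) : \bar R :=
  \big[Order.max/0%E]_(J <- fpowerset C | (#|` J| <= f)%N) delta V C T J.

Definition upd (w : pt -> pt) (c v : pt) : pt -> pt :=
  fun x => if x == c then v else w x.

(* Relational (big-step) semantics of the algorithm; all nondeterministic
   choices are allowed.  State = (T, wit). *)

Inductive inner (V C J : {fset pt}) (sigma : R) :
    {fset pt} -> (pt -> pt) -> {fset pt} -> (pt -> pt) -> Prop :=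
| inner_stop T w :
    (forall v, v \in V -> (dset v T <= (3 * sigma)%:E)%E) ->
    inner V C J sigma T w T w
| inner_step T w v c T' w' :
    v \in V -> ((3 * sigma)%:E < dset v T)%E ->
    c \in C -> c \notin J -> edist v c <= sigma ->
    inner V C J sigma (c |` T) (upd w c v) T' w' ->
    inner V C J sigma T w T' w'.

Inductive outer (V C : {fset pt}) (f : nat) (sigma : R) :
    {fset pt} -> (pt -> pt) -> {fset pt} -> (pt -> pt) -> Prop :=
| outer_stop T w :
    (forall J : {fset pt}, J `<=` C -> (#|` J| <= f)%N ->
        (delta V C T J <= (3 * sigma)%:E)%E) ->
    outer V C f sigma T w T w
| outer_step T w J T1 w1 T' w' :
    J `<=` C -> (#|` J| <= f)%N -> ((3 * sigma)%:E < delta V C T J)%E ->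
    inner V C J sigma (T `\` J) w T1 w1 ->
    outer V C f sigma T1 w1 T' w' ->
    outer V C f sigma T w T' w'.

End Defs.

(* Main.v *)
Require Import Defs.
From HB Require Import structures.
From mathcomp Require Import all_boot all_order all_algebra.
From mathcomp Require Import finmap.
From mathcomp Require Import all_classical all_reals ereal.
From mathcomp Require Import ring lra.
Import Order.TTheory GRing.Theory Num.Theory.
Local Open Scope ring_scope.
Section Aux.
Variables (R : realType) (d : nat).

Lemma sum_prod (F G : 'I_d -> R) :
  \sum_i \sum_j F i * G j = (\sum_i F i) * (\sum_j G j).
Proof. by rewrite mulr_suml; apply: eq_bigr => i _; rewrite mulr_sumr. Qed.

Lemma lagrange (a b : 'I_d -> R) :
  (\sum_i a i * b i) ^+ 2 <= (\sum_i a i ^+ 2) * (\sum_i b i ^+ 2).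
Proof.
have E : forall i j, (a i * b j - a j * b i)^+2 =
   a i^+2 * b j^+2 + b i^+2 * a j^+2 - 2 * ((a i * b i) * (a j * b j)).
  by move=> i j; ring.
have H0 : 0 <= \sum_i \sum_j (a i * b j - a j * b i)^+2.
  by apply: sumr_ge0 => i _; apply: sumr_ge0 => j _; exact: sqr_ge0.
have H1 : \sum_i \sum_j (a i * b j - a j * b i)^+2 =
   2 * ((\sum_i a i ^+ 2) * (\sum_i b i ^+ 2)) - 2 * (\sum_i a i * b i) ^+ 2.
  under eq_bigr => i _ do under eq_bigr => j _ do rewrite E.
  under eq_bigr => i _ do rewrite sumrB big_split /=.
  rewrite sumrB big_split /=.
  rewrite !sum_prod.
  under [X in _ - X]eq_bigr => i _ do rewrite -mulr_sumr.
  rewrite -mulr_sumr sum_prod. ring.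
rewrite H1 subr_ge0 ler_pM2l in H0; [exact H0|exact: ltr0Sn].
Qed.

Lemma edist_ge0 (x y : 'rV[R]_d) : 0 <= edist x y.
Proof. exact: sqrtr_ge0. Qed.

Lemma edistC (x y : 'rV[R]_d) : edist x y = edist y x.
Proof.
rewrite /edist; congr Num.sqrt; apply: eq_bigr => i _; ring.
Qed.

Lemma edist_tri (x y z : 'rV[R]_d) : edist x z <= edist x y + edist y z.
Proof.
rewrite /edist.
set a := fun i => x ord0 i - y ord0 i.
set b := fun i => y ord0 i - z ord0 i.
have -> : \sum_(i < d) (x ord0 i - z ord0 i) ^+ 2 = \sum_i (a i + b i) ^+ 2.
  by apply: eq_bigr => i _; rewrite /a /b; congr (_ ^+ 2); ring.
rewrite -/(\sum_i a i ^+ 2) -/(\sum_i b i ^+ 2).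
have hA : 0 <= \sum_i a i ^+ 2 by apply: sumr_ge0 => i _; exact: sqr_ge0.
have hB : 0 <= \sum_i b i ^+ 2 by apply: sumr_ge0 => i _; exact: sqr_ge0.
have hAB : 0 <= \sum_i (a i + b i) ^+ 2 by apply: sumr_ge0 => i _; exact: sqr_ge0.
have eq1 : \sum_i (a i + b i) ^+ 2 =
   \sum_i a i ^+ 2 + 2 * \sum_i a i * b i + \sum_i b i ^+ 2.
  rewrite mulr_sumr -!big_split /=; apply: eq_bigr => i _; ring.
have cs : \sum_i a i * b i <= Num.sqrt (\sum_i a i ^+ 2) * Num.sqrt (\sum_i b i ^+ 2).
  rewrite -sqrtrM //.
  apply: (le_trans (ler_norm _)).
  rewrite -sqrtr_sqr; apply: ler_wsqrtr; exact: lagrange.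
rewrite -(@ler_pXn2r _ 2) //; last 2 first.
- by rewrite nnegrE sqrtr_ge0.
- by rewrite nnegrE addr_ge0 // sqrtr_ge0.
rewrite sqr_sqrtr // eq1 sqrrD !sqr_sqrtr //.
lra.
Qed.

Lemma bigmin_le (T : eqType) (s : seq T) (F : T -> \bar R) x :
  x \in s -> (\big[Order.min/+oo%E]_(c <- s) F c <= F x)%E.
Proof.
elim: s => // y s IH; rewrite in_cons big_cons => /orP [/eqP -> | /IH H].
  by rewrite ge_min lexx.
by rewrite ge_min H orbT.
Qed.

Local Open Scope fset_scope.
Lemma dset_le (v c : 'rV[R]_d) (S : {fset 'rV[R]_d}) :
  c \in S -> (dset v S <= (edist v c)%:E)%E.
Proof. move=> cS; exact: bigmin_le. Qed.

End Aux.
Arguments edist_tri {R d}. Arguments edistC {R d}. Arguments edist_ge0 {R d}. Arguments dset_le {R d}.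

Local Open Scope fset_scope.
Definition Inv (R : realType) (d : nat) (sigma : R) (T : {fset 'rV[R]_d}) (w : 'rV[R]_d -> 'rV[R]_d) :=
  (forall c, c \in T -> edist (w c) c <= sigma) /\
  (forall c c', c \in T -> c' \in T -> c != c' -> 2 * sigma < edist (w c) (w c')).

Arguments Inv {R d}.

Lemma inner_inv (R : realType) (d : nat) V C J sigma (T : {fset 'rV[R]_d}) w T' w' :
  inner V C J sigma T w T' w' -> Inv sigma T w -> Inv sigma T' w'.
Proof.
elim=> {T w T' w'} // T w v c T' w' vV hv cC cJ hvc _ IH [I1 I2]; apply: IH.
have s0 : 0 <= sigma by apply: le_trans hvc; exact: edist_ge0.
have far : forall c', c' \in T -> 3 * sigma < edist v c'.
  move=> c' c'T; rewrite -lte_fin; apply: (lt_le_trans hv); exact: dset_le.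
have cT : c \notin T.
  apply/negP => cT; have := far c cT; lra.
have wv : forall c', c' \in T -> 2 * sigma < edist v (w c').
  move=> c' c'T; have := far c' c'T; have := I1 c' c'T.
  have := edist_tri v (w c') c'; rewrite (edistC (w c') c'); lra.
have upd_old : forall c', c' \in T -> upd w c v c' = w c'.
  move=> c' c'T; rewrite /upd; case: eqP => // E; by move: cT; rewrite -E c'T.
have upd_new : upd w c v c = v by rewrite /upd eqxx.
split.
- move=> c'; rewrite in_fset1U => /orP [/eqP -> | c'T].
    by rewrite upd_new.
  by rewrite upd_old //; exact: I1.
- move=> c1 c2; rewrite !in_fset1U => /orP [/eqP -> | c1T] /orP [/eqP -> | c2T].
  + by rewrite eqxx.
  + by move=> _; rewrite upd_new upd_old //; exact: wv.
  + by move=> _; rewrite upd_new upd_old // edistC; exact: wv.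
  + by move=> ne; rewrite !upd_old //; exact: I2.
Qed.

Arguments inner_inv {R d V C J sigma T w T' w'}.

Lemma outer_inv (R : realType) (d : nat) V C f sigma (T : {fset 'rV[R]_d}) w T' w' :
  outer V C f sigma T w T' w' -> Inv sigma T w -> Inv sigma T' w'.
Proof.
elim=> {T w T' w'} // T w J T1 w1 T' w' _ _ _ hin _ IH [I1 I2]; apply: IH.
apply: (inner_inv hin); split.
- by move=> c; rewrite in_fsetD => /andP [_ ?]; exact: I1.
- by move=> c c'; rewrite !in_fsetD => /andP [_ ?] /andP [_ ?]; exact: I2.
Qed.

Arguments outer_inv {R d V C f sigma T w T' w'}.

Theorem lemma20 (R : realType) (d : nat) (V C : {fset 'rV[R]_d}) (k f : nat)
    (sigma : R) :
  (1 <= k)%N ->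
  (sigmaf V C f C <= sigma%:E)%E ->
  forall (w0 : 'rV[R]_d -> 'rV[R]_d) (T : {fset 'rV[R]_d}) (wit : 'rV[R]_d -> 'rV[R]_d),
    outer V C f sigma fset0 w0 T wit ->
    forall c c', c \in T -> c' \in T -> c != c' ->
      2 * sigma < edist (wit c) (wit c').
Proof.
move=> _ _ w0 T wit ho.
have I0 : Inv sigma fset0 w0 by split=> [c|c c']; rewrite inE.
have [_ I2] := outer_inv ho I0.
exact: I2.
Qed.
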